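(* Let $\mathcal{T}$ denote the bounded linear operator on the quotient space $H_{ber}^2(D)/X$ induced by the operator $\mathcal{T}:\sum_{n\ge 0} a_n z^n\mapsto \sum_{n\ge 0} a_n z^{T(n)}$ on the Bergman space, where $X=\operatorname{span}\{1,z,z^2\}$. Then $\mathcal{T}$ is surjective on $H_{ber}^2(D)/X$. Moreover, if the Collatz conjecture holds, then \[ H_{ber}^2(D)/X=\overline{\bigcup_{n=1}^{\infty}\operatorname{Ker}(\mathcal{T}^n)}. \]
   Context: $T:\mathbb{Z}\to\mathbb{Z}$ is the (reduced) Collatz map: $T(n)=\frac{3n+1}{2}$ for odd $n$ and $T(n)=\frac n2$ for even $n$. $D$ is the open unit disk. $H_{ber}^2(D)$ is the Bergman space of holomorphic functions $f$ on $D$ with $\|f\|^2=\int_D|f|^2\,dA<\infty$ (so $\|z^n\|^2=\frac{\pi}{n+1}$). The operator $\mathcal{T}f(z)=(Sf)(\sqrt z)+\sqrt z\,(Af)(z^{3/2})$, with $Sf(z)=\frac{f(z)+f(-z)}2$, $Af(z)=\frac{f(z)-f(-z)}2$, acts on power series by $\sum a_nz^n\mapsto\sum a_n z^{T(n)}$ (i.e. $\mathcal{T}z^n=z^{T(n)}$); it is a bounded operator on $H_{ber}^2(D)$ and leaves $X=\operatorname{span}\{1,z,z^2\}$ invariant, hence induces a bounded operator on the quotient Banach space $H_{ber}^2(D)/X$. The Collatz conjecture is the statement that for every positive integer $n$ there is $k\ge 0$ with $T^k(n)=1$. *)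

(* Defs.v *)
From Stdlib Require Import Reals Arith.
From Coquelicot Require Import Coquelicot.
Open Scope R_scope.

Definition collatzT (n : nat) : nat :=
  if Nat.odd n then ((3 * n + 1) / 2)%nat else (n / 2)%nat.

Definition collatz_conjecture : Prop :=
  forall n : nat, (1 <= n)%nat -> exists k : nat, Nat.iter k collatzT n = 1%nat.

(* A holomorphic function on D is identified with its Taylor coefficient
   sequence a : nat -> C  (f = sum a_n z^n). *)

(* n-th term of the squared Bergman norm: |a_n|^2 * ||z^n||^2, ||z^n||^2 = pi/(n+1). *)
Definition bergman_term (a : nat -> C) (n : nat) : R :=
  (Cmod (a n)) ^ 2 * (PI / INR (n + 1)).

Definition in_bergman (a : nat -> C) : Prop := ex_series (bergman_term a).

Definition bergman_norm (a : nat -> C) : R := sqrt (Series (bergman_term a)).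

Definition inX (a : nat -> C) : Prop := forall n : nat, (3 <= n)%nat -> a n = RtoC 0.

Definition csub (a b : nat -> C) : nat -> C := fun n => Cminus (a n) (b n).

(* The operator  sum a_n z^n |-> sum a_n z^(T n):  the coefficient of z^m in the
   image is the sum of the a_n over all n with T n = m (all such n satisfy n <= 2m). *)
Definition Top (a : nat -> C) : nat -> C :=
  fun m => sum_n (fun n => if Nat.eqb (collatzT n) m then a n else RtoC 0) (2 * m).

(* Main.v *)
Require Import Defs.
From Stdlib Require Import Reals Arith Lia Lra FunctionalExtensionality.
From Coquelicot Require Import Coquelicot.
Open Scope R_scope.

Lemma T_even m : collatzT (2 * m) = m.
Proof. unfold collatzT. rewrite Nat.odd_even. rewrite Nat.mul_comm, Nat.div_mul; lia. Qed.

Lemma T_odd m : collatzT (2 * m + 1) = (3 * m + 2)%nat.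
Proof. unfold collatzT. rewrite Nat.odd_odd.
  replace (3 * (2 * m + 1) + 1)%nat with ((3 * m + 2) * 2)%nat by lia.
  rewrite Nat.div_mul; lia. Qed.

Lemma T_bound k : (k <= 2 * collatzT k)%nat.
Proof. destruct (Nat.Even_or_Odd k) as [[m ->]|[m ->]].
  rewrite T_even; lia. rewrite T_odd; lia. Qed.

Lemma T_ge3 k : (3 <= collatzT k)%nat -> (3 <= k)%nat.
Proof. destruct (Nat.Even_or_Odd k) as [[m ->]|[m ->]].
  rewrite T_even; lia. rewrite T_odd. intros. destruct m; [|lia].
  simpl in H. lia. Qed.

Definition single (k : nat) (c : C) : nat -> C :=
  fun m => if Nat.eqb m k then c else RtoC 0.

Lemma sum_n_zero' (u : nat -> C) N :
  (forall j, (j <= N)%nat -> u j = RtoC 0) -> sum_n u N = RtoC 0.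
Proof. induction N; intros H.
  rewrite sum_O. apply H; lia.
  rewrite sum_Sn, IHN by (intros; apply H; lia). rewrite H by lia.
  change (Cplus (RtoC 0) (RtoC 0) = RtoC 0). apply Cplus_0_l. Qed.

Lemma sum_n_single (k : nat) (c : C) N :
  sum_n (single k c) N = if Nat.leb k N then c else RtoC 0.
Proof. induction N.
  rewrite sum_O. unfold single. destruct k; reflexivity.
  rewrite sum_Sn, IHN. unfold single.
  destruct (Nat.eqb_spec (S N) k); destruct (Nat.leb_spec k N); destruct (Nat.leb_spec k (S N)); try lia;
  change (plus ?a ?b) with (Cplus a b); try apply Cplus_0_l; try apply Cplus_0_r.
Qed.

Lemma Top_single k c : Top (single k c) = single (collatzT k) c.
Proof. apply functional_extensionality; intro m. unfold Top.
  rewrite (sum_n_ext _ (single k (if Nat.eqb (collatzT k) m then c else RtoC 0))).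
  2:{ intro n. unfold single. destruct (Nat.eqb_spec n k). subst. reflexivity.
      destruct (Nat.eqb (collatzT n) m); reflexivity. }
  rewrite sum_n_single. unfold single.
  destruct (Nat.eqb_spec (collatzT k) m); destruct (Nat.eqb_spec m (collatzT k)); try lia.
  - pose proof (T_bound k). destruct (Nat.leb_spec k (2*m)); [reflexivity|lia].
  - destruct (Nat.leb k (2*m)); reflexivity.
Qed.

Lemma iter_single n k c : Nat.iter n Top (single k c) = single (Nat.iter n collatzT k) c.
Proof. induction n; simpl. reflexivity. rewrite IHn. apply Top_single. Qed.

Lemma Top_X a : inX a -> inX (Top a).
Proof. intros H m Hm. unfold Top. apply sum_n_zero'. intros j _.
  destruct (Nat.eqb_spec (collatzT j) m). apply H, T_ge3. lia. reflexivity. Qed.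

Lemma iter_X n a : inX a -> inX (Nat.iter n Top a).
Proof. induction n; simpl; auto. intros; apply Top_X; auto. Qed.

Definition cadd (a b : nat -> C) : nat -> C := fun m => Cplus (a m) (b m).

Lemma Top_add a b : Top (cadd a b) = cadd (Top a) (Top b).
Proof. apply functional_extensionality; intro m. unfold Top, cadd.
  rewrite <- (sum_n_plus (G:=C_AbelianMonoid)). apply sum_n_ext. intro n.
  destruct (Nat.eqb (collatzT n) m). reflexivity.
  symmetry. apply Cplus_0_l. Qed.

Lemma iter_add n a b : Nat.iter n Top (cadd a b) = cadd (Nat.iter n Top a) (Nat.iter n Top b).
Proof. induction n; simpl. reflexivity. rewrite IHn. apply Top_add. Qed.

Definition good (a : nat -> C) := exists n, inX (Nat.iter n Top a).

Lemma good_mono a n p : inX (Nat.iter n Top a) -> inX (Nat.iter (p + n) Top a).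
Proof. intros H. rewrite Nat.iter_add. apply iter_X; auto. Qed.

Lemma good_add a b : good a -> good b -> good (cadd a b).
Proof. intros [n Ha] [p Hb]. exists (n + p)%nat. rewrite iter_add.
  intros m Hm. unfold cadd.
  rewrite (good_mono b p n Hb m Hm). rewrite Nat.add_comm.
  rewrite (good_mono a n p Ha m Hm). apply Cplus_0_l. Qed.

Lemma good_single k c : collatz_conjecture -> good (single k c).
Proof. intros HC. destruct k.
  - exists O. simpl. intros m Hm. unfold single. destruct (Nat.eqb_spec m 0); [lia|reflexivity].
  - destruct (HC (S k)) as [j Hj]; [lia|]. exists j. rewrite iter_single, Hj.
    intros m Hm. unfold single. destruct (Nat.eqb_spec m 1); [lia|reflexivity].
Qed.

Definition trunc (f : nat -> C) (N : nat) : nat -> C :=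
  fun m => if Nat.ltb m N then f m else RtoC 0.

Lemma good_trunc f N : collatz_conjecture -> good (trunc f N).
Proof. intros HC. induction N.
  - exists O. intros m _. reflexivity.
  - replace (trunc f (S N)) with (cadd (trunc f N) (single N (f N))).
    apply good_add; auto. apply good_single; auto.
    apply functional_extensionality; intro m. unfold cadd, trunc, single.
    destruct (Nat.ltb_spec m N); destruct (Nat.ltb_spec m (S N)); destruct (Nat.eqb_spec m N); try lia.
    apply Cplus_0_r. subst. apply Cplus_0_l. apply Cplus_0_l.
Qed.

Definition spread (f : nat -> C) : nat -> C :=
  fun n => if Nat.odd n then RtoC 0 else f (n / 2)%nat.

Lemma spread_even f k : spread f (2 * k) = f k.
Proof. unfold spread. rewrite Nat.odd_even. rewrite (Nat.mul_comm 2 k), Nat.div_mul; [reflexivity|lia]. Qed.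
Lemma spread_odd f k : spread f (2 * k + 1) = RtoC 0.
Proof. unfold spread. rewrite Nat.odd_odd. reflexivity. Qed.

Lemma bt_nonneg a n : 0 <= bergman_term a n.
Proof. unfold bergman_term. apply Rmult_le_pos. apply pow2_ge_0.
  apply Rmult_le_pos. left; apply PI_RGT_0. left; apply Rinv_0_lt_compat, lt_0_INR; lia. Qed.

Lemma ex_pseries1 (b : nat -> R) : ex_series b -> ex_pseries b (1 ^ 2).
Proof. intros H. unfold ex_pseries. apply (ex_series_ext b); auto. intro n.
  rewrite pow_n_pow. change (scal ?a ?c) with (a * c). rewrite !pow1. exact (eq_sym (Rmult_1_l _)). Qed.

Lemma spread_bergman f : in_bergman f -> in_bergman (spread f).
Proof. intros H. unfold in_bergman.
  assert (E : ex_pseries (bergman_term (spread f)) 1).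
  { apply ex_pseries_odd_even.
    - apply ex_pseries1. apply (@ex_series_le R_AbsRing R_CompleteNormedModule _ (bergman_term f)); auto.
      intro n. change (norm ?x) with (Rabs x). rewrite Rabs_pos_eq by apply bt_nonneg.
      unfold bergman_term. rewrite spread_even. apply Rmult_le_compat_l. apply pow2_ge_0.
      apply Rmult_le_compat_l. left; apply PI_RGT_0. apply Rinv_le_contravar.
      apply lt_0_INR; lia. apply le_INR; lia.
    - apply ex_pseries1. apply (@ex_series_le R_AbsRing R_CompleteNormedModule _ (bergman_term f)); auto.
      intro n. change (norm ?x) with (Rabs x). rewrite Rabs_pos_eq by apply bt_nonneg.
      unfold bergman_term. rewrite spread_odd. rewrite Cmod_0. 
      replace (0 ^ 2 * (PI / INR (2 * n + 1 + 1))) with 0 by ring. apply bt_nonneg. }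
  unfold ex_pseries in E. revert E. apply ex_series_ext. intro n.
  rewrite pow_n_pow. change (scal ?a ?c) with (a * c). rewrite !pow1. exact (Rmult_1_l _). Qed.

Lemma Top_spread f m : Top (spread f) m = f m.
Proof. unfold Top.
  rewrite (sum_n_ext _ (single (2*m) (f m))).
  - rewrite sum_n_single. destruct (Nat.leb_spec (2*m) (2*m)); [reflexivity|lia].
  - intro n. unfold single. destruct (Nat.Even_or_Odd n) as [[k ->]|[k ->]].
    + rewrite T_even, spread_even. destruct (Nat.eqb_spec k m); destruct (Nat.eqb_spec (2*k) (2*m)); try lia.
      subst; reflexivity. reflexivity.
    + rewrite spread_odd. destruct (Nat.eqb (collatzT _) m); destruct (Nat.eqb_spec (2*k+1) (2*m)); try lia; reflexivity.
Qed.

Lemma part1 : forall f : nat -> C, in_bergman f ->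
     exists g : nat -> C, in_bergman g /\ inX (csub (Top g) f).
Proof. intros f Hf. exists (spread f). split. apply spread_bergman; auto.
  intros m _. unfold csub. rewrite Top_spread. apply (proj1 (Ceq_minus _ _)). reflexivity. Qed.

Lemma bt_trunc_le f N n : Rabs (bergman_term (trunc f N) n) <= bergman_term f n.
Proof. rewrite Rabs_pos_eq by apply bt_nonneg. unfold trunc, bergman_term.
  destruct (Nat.ltb n N). apply Rle_refl. rewrite Cmod_0.
  replace (0 ^ 2 * (PI / INR (n + 1))) with 0 by ring.
  pose proof (bt_nonneg f n). unfold bergman_term in H. exact H. Qed.

Lemma trunc_bergman f N : in_bergman f -> in_bergman (trunc f N).
Proof. intros H. apply (@ex_series_le R_AbsRing R_CompleteNormedModule _ (bergman_term f)); auto.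
  intro n. apply bt_trunc_le. Qed.

Definition tailf (f : nat -> C) N : nat -> R :=
  fun n => if Nat.ltb n N then 0 else bergman_term f n.

Lemma tail_eq f N n :
  bergman_term (csub (csub f (trunc f N)) (fun _ => RtoC 0)) n = tailf f N n.
Proof. unfold tailf, bergman_term, csub, trunc. destruct (Nat.ltb n N).
  - replace (Cminus (Cminus (f n) (f n)) (RtoC 0)) with (RtoC 0) by ring.
    rewrite Cmod_0. ring.
  - replace (Cminus (Cminus (f n) (RtoC 0)) (RtoC 0)) with (f n) by ring. reflexivity. Qed.

Lemma sqrt_lt_eps x eps : 0 < eps -> x < eps ^ 2 -> sqrt x < eps.
Proof. intros He Hx. destruct (Rle_dec 0 x).
  - rewrite <- (sqrt_pow2 eps) by lra. apply sqrt_lt_1_alt. lra.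
  - rewrite sqrt_neg_0 by lra. exact He. Qed.

Lemma sumf_zero (u : nat -> R) N : (forall j, (j <= N)%nat -> u j = 0) -> sum_f_R0 u N = 0.
Proof. induction N; intros H; simpl. apply H; lia.
  rewrite IHN by (intros; apply H; lia). rewrite H by lia. ring. Qed.

Lemma part2_norm f eps : in_bergman f -> 0 < eps ->
  exists N, bergman_norm (csub (csub f (trunc f N)) (fun _ => RtoC 0)) < eps.
Proof. intros Hf He.
  pose proof (Series_correct _ Hf) as HS. apply is_series_Reals in HS.
  destruct (HS (eps ^ 2)) as [N HN]. apply pow_lt; lra.
  specialize (HN N (le_n N)). unfold Rdist in HN.
  exists (S N). unfold bergman_norm. apply sqrt_lt_eps; auto.
  rewrite (Series_ext _ (tailf f (S N))) by apply tail_eq.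
  assert (Ht : ex_series (tailf f (S N))).
  { apply (@ex_series_le R_AbsRing R_CompleteNormedModule _ (bergman_term f)); auto.
    intro n. change (norm ?x) with (Rabs x). unfold tailf. destruct (Nat.ltb n (S N)).
    rewrite Rabs_R0; apply bt_nonneg. rewrite Rabs_pos_eq by apply bt_nonneg. apply Rle_refl. }
  rewrite (Series_incr_n _ (S N)) by (auto; lia). simpl Init.Nat.pred.
  rewrite sumf_zero. 2:{ intros j Hj. unfold tailf. destruct (Nat.ltb_spec j (S N)); [reflexivity|lia]. }
  rewrite (Series_ext _ (fun k => bergman_term f (S N + k))).
  2:{ intro n. unfold tailf. destruct (Nat.ltb_spec (S N + n) (S N)); [lia|reflexivity]. }
  rewrite (Series_incr_n (bergman_term f) (S N)) in HN by (auto; lia). simpl Init.Nat.pred in HN.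
  apply Rabs_def2 in HN. lra. Qed.

Theorem mainTheorem1 :
  (forall f : nat -> C, in_bergman f ->
     exists g : nat -> C, in_bergman g /\ inX (csub (Top g) f))
  /\
  (collatz_conjecture ->
   forall f : nat -> C, in_bergman f ->
   forall eps : R, 0 < eps ->
     exists (n : nat) (g : nat -> C),
       (1 <= n)%nat /\ in_bergman g /\ inX (Nat.iter n Top g) /\
       exists x : nat -> C, inX x /\
         bergman_norm (csub (csub f g) x) < eps).
Proof.
  split. exact part1.
  intros HC f Hf eps He.
  destruct (part2_norm f eps Hf He) as [N HN].
  destruct (good_trunc f N HC) as [n0 Hn0].
  exists (1 + n0)%nat, (trunc f N). split. lia. split. apply trunc_bergman; auto.
  split. apply good_mono; auto.
  exists (fun _ => RtoC 0). split. intros m _; reflexivity. exact HN.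
Qed.
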